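(* Let $X$ be an infinite Tychonoff space and let $E$ be a Banach space. If $T:C_p(X)\to E_w$ is a sequentially continuous linear operator, then for every sequence $\{U_n: n\in \omega\}$ of pairwise disjoint nonempty open subsets of $X$ there exists $N$ such that $T(f)=0$ for all $n\geqslant N$ and all $f\in C(X)$ with $\operatorname{supp}(f)\subset U_n$.
   Context: $C_p(X)$ is the space $C(X)$ of continuous real-valued functions on $X$ with the pointwise convergence topology; $E_w$ is $E$ with its weak topology. For $f:X\to\mathbb{R}$, $\operatorname{supp}(f)=\{t\in X: f(t)\neq 0\}$. A map is sequentially continuous if it sends convergent sequences to convergent sequences. *)

(* Defs.v *)
From HB Require Import structures.
From mathcomp Require Import all_boot all_order all_algebra.
From mathcomp Require Import all_classical all_reals all_analysis.
Set Implicit Arguments. Unset Strict Implicit. Unset Printing Implicit Defensive.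
Import Order.TTheory GRing.Theory Num.Theory.
Import numFieldNormedType.Exports.
Local Open Scope classical_set_scope.
Local Open Scope ring_scope.

Definition tychonoff_space (R : realType) (X : topologicalType) : Prop :=
  accessible_space X /\
  forall (a : X) (B : set X), closed B -> ~ B a ->
    exists f : X -> R, continuous f /\ (forall x, 0 <= f x <= 1) /\
      f a = 0 /\ (forall b, B b -> f b = 1).

Definition supp (X : Type) (R : realType) (f : X -> R) : set X :=
  [set t | f t != 0].

Definition cvg_pointwise (X : Type) (R : realType)
    (u : nat -> X -> R) (f : X -> R) : Prop :=
  forall x, (fun k => u k x) @ \oo --> f x.

Definition cont_lin_functional (R : realType) (E : normedModType R)
    (phi : E -> R) : Prop :=
  continuous phi /\ forall (a : R) (u v : E), phi (a *: u + v) = a * phi u + phi v.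

Definition cvg_weak (R : realType) (E : normedModType R)
    (u : nat -> E) (l : E) : Prop :=
  forall phi : E -> R, cont_lin_functional phi -> (fun k => phi (u k)) @ \oo --> phi l.

(* Main.v *)
Require Import Defs.
From HB Require Import structures.
From mathcomp Require Import all_boot all_order all_algebra.
From mathcomp Require Import all_classical all_reals all_analysis.
From mathcomp Require Import ring lra.
Import Order.TTheory GRing.Theory Num.Theory.
Import numFieldNormedType.Exports.
Local Open Scope classical_set_scope.
Local Open Scope ring_scope.
Definition hb_seed {R : realType} {E : normedModType R} (x : E) : set (E * R) :=
  [set p | exists t : R, p = (t *: x, t * `|x|)].

Definition hb_good {R : realType} {E : normedModType R} (x : E) (G : set (E * R)) :=
  [/\ (forall v r s, G (v, r) -> G (v, s) -> r = s),
      (forall (a : R) p q, G p -> G q -> G (a *: p.1 + q.1, a * p.2 + q.2)),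
      (forall v r, G (v, r) -> r <= `|v|) &
      hb_seed x `<=` G].

Lemma hb_good_seed (R : realType) (E : normedModType R) (x : E) : hb_good x (hb_seed x).
Proof.
split.
- move=> v r s [t [-> ->]] [u [eu ->]].
  have [->|x0] := eqVneq x 0; first by rewrite normr0 !mulr0.
  suff -> : t = u by [].
  apply/eqP; rewrite -subr_eq0; apply/eqP.
  have : (t - u) *: x = 0 by rewrite scalerBl eu subrr.
  by move/eqP; rewrite scaler_eq0 (negbTE x0) orbF => /eqP.
- move=> a [p1 p2] [q1 q2] [t [-> ->]] [u [-> ->]] /=.
  exists (a * t + u); rewrite scalerDl scalerA; congr pair; ring.
- move=> v r [t [-> ->]]; rewrite normrZ.
  by apply: ler_wpM2r => //; exact: ler_norm.
- by [].
Qed.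

Lemma hb_good_chain (R : realType) (E : normedModType R) (x : E) (F : set (set (E * R))) :
  F `<=` (fun G => G = set0 \/ hb_good x G) -> total_on F subset ->
  (fun G => G = set0 \/ hb_good x G) (\bigcup_(X in F) X).
Proof.
move=> FP Ftot.
have [->|Hne] := pselect ((\bigcup_(X in F) X) = set0); first by left.
right.
have goodF : forall X, F X -> forall p, X p -> hb_good x X.
  move=> X FX p Xp; case: (FP X FX) => // X0.
  by move: Xp; rewrite X0.
have two : forall p q, (\bigcup_(X in F) X) p -> (\bigcup_(X in F) X) q ->
    exists X, [/\ F X, X p & X q].
  move=> p q [X1 F1 p1] [X2 F2 q2].
  case: (Ftot X1 X2 F1 F2) => sub.
  - by exists X2; split => //; exact: sub.
  - by exists X1; split => //; exact: sub.
have [p0 [X0 FX0 X0p0]] : exists p, (\bigcup_(X in F) X) p.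
  apply: contra_notP Hne => H; apply/seteqP; split => // p Hp.
  by exfalso; apply: H; exists p.
split.
- move=> v r s Hr Hs; have [X [FX Xr Xs]] := two _ _ Hr Hs.
  by case: (goodF X FX _ Xr) => fX _ _ _; exact: fX Xr Xs.
- move=> a p q Hp Hq; have [X [FX Xp Xq]] := two _ _ Hp Hq.
  case: (goodF X FX _ Xp) => _ lX _ _; exists X => //; exact: lX.
- move=> v r [X FX Xr].
  by case: (goodF X FX _ Xr) => _ _ dX _; exact: dX.
- move=> p sp; exists X0 => //.
  by case: (goodF X0 FX0 _ X0p0) => _ _ _ sX; exact: sX.
Qed.
Lemma hb_ext {R : realType} {E : normedModType R} {x : E} {A : set (E * R)} {x0 : E} :
  hb_good x A -> (forall r, ~ A (x0, r)) -> exists B, hb_good x B /\ A `<` B.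
Proof.
case=> Afun Alin Adom Aseed Ax0.
have A00 : A (0, 0).
  by apply: Aseed; exists 0; rewrite scale0r mul0r.
have Asc : forall a d r, A (d, r) -> A (a *: d, a * r).
  by move=> a d r H; have := Alin a (d, r) (0, 0) H A00; rewrite /= !addr0.
have Aadd : forall d r e s, A (d, r) -> A (e, s) -> A (d + e, r + s).
  by move=> d r e s H1 H2; have := Alin 1 (d, r) (e, s) H1 H2; rewrite /= scale1r mul1r.
pose S := [set y | exists d r, A (d, r) /\ y = r - `|d - x0|].
have key : forall d r e s, A (d, r) -> A (e, s) -> r - `|d - x0| <= `|e + x0| - s.
  move=> d r e s H1 H2.
  have h1 := Adom _ _ (Aadd _ _ _ _ H1 H2).
  have h2 : `|d + e| <= `|d - x0| + `|e + x0|.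
    have -> : d + e = (d - x0) + (e + x0) by rewrite addrACA addNr addr0.
    exact: ler_normD.
  lra.
have hS : S !=set0 by exists (0 - `|0 - x0|), 0, 0.
have hub : ubound S (`|0 + x0| - 0).
  by move=> y [d [r [H ->]]]; exact: key H A00.
pose c := sup S.
have c_ub : forall d r, A (d, r) -> r - `|d - x0| <= c.
  move=> d r H; apply: (sup_upper_bound (conj hS (ex_intro _ _ hub))).
  by exists d, r.
have c_lb : forall e s, A (e, s) -> c <= `|e + x0| - s.
  move=> e s H; apply: ge_sup => // y [d [r [Hd ->]]]; exact: key Hd H.
pose B := [set p | exists d r t, A (d, r) /\ p = (d + t *: x0, r + t * c)].
exists B; split; last first.
  split.
    by move=> [d r] H; exists d, r, 0; rewrite scale0r mul0r !addr0.
  move=> sub; have : B (x0, c) by exists 0, 0, 1; rewrite scale1r mul1r !add0r.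
  by move/sub; exact: Ax0.
split.
- move=> v r s [d1 [r1 [t1 [H1 [e1 e1']]]]] [d2 [r2 [t2 [H2 [e2 e2']]]]].
  rewrite e1' e2'.
  have [et|nt] := eqVneq t1 t2.
    subst t2; have dd : d1 = d2 by apply: (addIr (t1 *: x0)); rewrite -e1 -e2.
    by subst d2; rewrite (Afun _ _ _ H1 H2).
  exfalso.
  have hd : A (d2 - d1, r2 - r1).
    by have := Aadd _ _ _ _ H2 (Asc (-1) _ _ H1); rewrite scaleN1r mulN1r.
  have hx : (t1 - t2) *: x0 = d2 - d1.
    rewrite scalerBl; apply/eqP; rewrite subr_eq; apply/eqP.
    have h : d1 + t1 *: x0 = d2 + t2 *: x0 by rewrite -e1 -e2.
    by rewrite -addrA (addrC (- d1)) addrA -h addrAC subrr add0r.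
  have tn : t1 - t2 != 0 by rewrite subr_eq0.
  apply: (Ax0 ((t1 - t2)^-1 * (r2 - r1))).
  have -> : x0 = (t1 - t2)^-1 *: (d2 - d1) by rewrite -hx scalerA mulVf // scale1r.
  exact: Asc.
- move=> a p q [d1 [r1 [t1 [H1 ->]]]] [d2 [r2 [t2 [H2 ->]]]] /=.
  exists (a *: d1 + d2), (a * r1 + r2), (a * t1 + t2); split.
    by have := Alin a (d1, r1) (d2, r2) H1 H2.
  congr pair; last by ring.
  by rewrite scalerDr scalerA scalerDl addrACA.
- move=> v r [d [r0 [t [H [-> ->]]]]].
  case: (ltrgtP t 0) => ht.
  + pose s := - t.
    have sp : 0 < s by rewrite /s oppr_gt0.
    have h := c_ub _ _ (Asc s^-1 _ _ H).
    have -> : `|d + t *: x0| = s * `|s^-1 *: d - x0|.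
      rewrite -[s in s * _](gtr0_norm sp) -normrZ scalerBr scalerA mulfV ?gt_eqF // scale1r.
      by rewrite /s scaleNr opprK.
    move: h; set r' := s^-1 * r0; set N := `|s^-1 *: d - x0| => h.
    have -> : r0 = s * r' by rewrite /r' mulrA mulfV ?gt_eqF // mul1r.
    have -> : t = - s by rewrite /s opprK.
    nra.
  + have h := c_lb _ _ (Asc t^-1 _ _ H).
    have -> : `|d + t *: x0| = t * `|t^-1 *: d + x0|.
      by rewrite -[t in t * _](gtr0_norm ht) -normrZ scalerDr scalerA mulfV ?gt_eqF // scale1r.
    move: h; set r' := t^-1 * r0; set N := `|t^-1 *: d + x0| => h.
    have -> : r0 = t * r' by rewrite /r' mulrA mulfV ?gt_eqF // mul1r.
    nra.
  + by subst t; rewrite scale0r mul0r !addr0; exact: Adom.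
- move=> [v r] sp; exists v, r, 0; split; first exact: Aseed.
  by rewrite scale0r mul0r !addr0.
Qed.
Lemma hahn_banach1 {R : realType} {E : normedModType R} (x : E) :
  exists psi : E -> R,
    [/\ (forall (a : R) u v, psi (a *: u + v) = a * psi u + psi v),
        (forall v, `|psi v| <= `|v|) & psi x = `|x|].
Proof.
have [A [PA maxA]] := Zorn_bigcup (@hb_good_chain R E x).
have gA : hb_good x A.
  case: PA => // A0; exfalso; apply: (maxA (hb_seed x)); last by right; exact: hb_good_seed.
  rewrite A0; split => // sub.
  have : hb_seed x (0 *: x, 0 * `|x|) by exists 0.
  by move/sub.
have Afull : forall v, exists r, A (v, r).
  move=> v; have [//|H] := pselect (exists r, A (v, r)); exfalso.
  have [B [gB AB]] := hb_ext (x0 := v) gA (fun r Ar => H (ex_intro _ r Ar)).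
  by apply: (maxA B AB); right.
case: gA => Afun Alin Adom Aseed.
pose psi v := xget 0 [set r | A (v, r)].
have Apsi : forall w, A (w, psi w) by move=> w; exact: (xgetPex 0 (Afull w)).
exists psi; split.
- move=> a u v; apply: (Afun (a *: u + v)); first exact: Apsi.
  exact: (Alin a (u, psi u) (v, psi v)).
- move=> v; rewrite ler_norml; apply/andP; split; last exact: Adom (Apsi v).
  have A00 : A (0, 0) by apply: Aseed; exists 0; rewrite scale0r mul0r.
  have h := Alin (-1) (v, psi v) (0, 0) (Apsi v) A00.
  rewrite /= !addr0 scaleN1r mulN1r in h.
  have := Adom _ _ h; rewrite normrN; lra.
- apply: (Afun x); first exact: Apsi.
  by apply: Aseed; exists 1; rewrite scale1r mul1r.
Qed.

Lemma lin_bounded_continuous (R : realType) (E : normedModType R) (f : E -> R) (C : R) :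
  0 < C ->
  (forall (a : R) u v, f (a *: u + v) = a * f u + f v) ->
  (forall v, `|f v| <= C * `|v|) -> continuous f.
Proof.
move=> C0 lin bnd v.
have fsub : forall w, f v - f w = f (v - w).
  move=> w; have := lin 1 (v - w) w; rewrite scale1r mul1r subrK => ->.
  by rewrite addrK.
apply/cvgrPdist_le => e e0.
have h : \forall w \near v, `|v - w| <= C^-1 * e.
  apply: (@cvgr_dist_le _ _ _ _ _ id); first exact: cvg_id.
  by rewrite mulr_gt0 // invr_gt0.
apply: filterS h => w /= hw.
rewrite fsub; apply: le_trans (bnd _) _.
by rewrite -ler_pdivlMl.
Qed.
Fixpoint Fseq {R : realType} {E : normedModType R} (q : R) (psi : nat -> E -> R)
    (y : nat -> E) (n : nat) (v : E) : R :=
  match n with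
  | 0 => 0
  | n'.+1 => Fseq q psi y n' v +
      (if 0 <= Fseq q psi y n' (y n') then 1 else -1) * q ^+ n' * psi n' v
  end.

Lemma separating_functional (R : realType) (E : normedModType R) (y : nat -> E) :
  (forall j, y j != 0) ->
  exists phi : E -> R, cont_lin_functional phi /\ forall j, phi (y j) != 0.
Proof.
move=> y0.
have [psi Hpsi] := choice (fun j => hahn_banach1 (R := R) (E := E) (y j)).
have psilin : forall j (a : R) u v, psi j (a *: u + v) = a * psi j u + psi j v.
  by move=> j; case: (Hpsi j).
have psib : forall j v, `|psi j v| <= `|v| by move=> j; case: (Hpsi j).
have psiy : forall j, psi j (y j) = `|y j| by move=> j; case: (Hpsi j).
pose q : R := 3^-1.
have q0 : 0 < q by rewrite /q invr_gt0.
have q1 : q < 1 by rewrite /q invf_lt1 // ltr1n.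
pose F := Fseq q psi y.
pose sg n : R := if 0 <= F n (y n) then 1 else -1.
have sgn : forall n, `|sg n| = 1.
  by move=> n; rewrite /sg; case: ifP => _; rewrite ?normrN normr1.
have FS : forall n v, F n.+1 v = F n v + sg n * q ^+ n * psi n v by [].
pose a n v := sg n * q ^+ n * psi n v.
have abnd : forall n v, `|a n v| <= q ^+ n * `|v|.
  move=> n v; rewrite /a !normrM sgn mul1r normrX (gtr0_norm q0).
  by apply: ler_wpM2l => //; exact: exprn_ge0 (ltW q0).
have Fser : forall v, (fun n => F n v) = series (a ^~ v).
  move=> v; apply: funext; elim=> [|n IH]; first by rewrite /series /= big_geq.
  by rewrite seriesSr -IH FS.
have Fcvg : forall v, cvgn (fun n => F n v).
  move=> v; rewrite Fser; apply: normed_cvg.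
  apply: (@series_le_cvg _ _ (geometric `|v| q)).
  - by move=> n; exact: normr_ge0.
  - by move=> n /=; rewrite mulr_ge0 // exprn_ge0 // ltW.
  - by move=> n /=; rewrite mulrC; exact: abnd.
  - by apply: is_cvg_geometric_series; rewrite gtr0_norm.
have tail : forall v m k, `|F (m + k)%N v - F m v| + 2 * q ^+ (m + k) * `|v| <= 2 * q ^+ m * `|v|.
  move=> v m; elim=> [|k IH]; first by rewrite addn0 subrr normr0 add0r.
  rewrite addnS FS.
  have h1 : `|F (m + k)%N v + a (m + k)%N v - F m v| <= `|F (m + k)%N v - F m v| + q ^+ (m + k) * `|v|.
    rewrite addrAC; apply: le_trans (ler_normD _ _) _; rewrite lerD2l; exact: abnd.
  have h2 : 2 * q ^+ (m + k).+1 * `|v| + q ^+ (m + k) * `|v| <= 2 * q ^+ (m + k) * `|v|.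
    rewrite exprSr.
    have : 0 <= q ^+ (m + k) * `|v| by rewrite mulr_ge0 // exprn_ge0 // ltW.
    rewrite /q; set Q := q ^+ (m + k); set N := `|v|; move=> hQ.
    have -> : 2 * (Q * 3^-1) * N = (2 / 3) * (Q * N) by ring.
    have -> : 2 * Q * N = 2 * (Q * N) by ring.
    set P := Q * N in hQ *; lra.
  move: h1; rewrite /a -/(sg _) => h1.
  lra.
pose phi v := limn (fun n => F n v).
have phitail : forall v m, `|phi v - F m v| <= 2 * q ^+ m * `|v|.
  move=> v m; rewrite ler_norml; apply/andP; split.
  - rewrite lerBrDr; apply: limr_ge; first exact: Fcvg.
    exists m => // n /= hmn; rewrite -(subnKC hmn).
    have := tail v m (n - m)%N.
    have : 0 <= 2 * q ^+ (m + (n - m)) * `|v| by rewrite !mulr_ge0 // exprn_ge0 // ltW.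
    have : - (F (m + (n - m))%N v - F m v) <= `|F (m + (n - m))%N v - F m v|.
      by rewrite -normrN; exact: ler_norm.
    lra.
  - rewrite lerBlDr; apply: limr_le; first exact: Fcvg.
    exists m => // n /= hmn; rewrite -(subnKC hmn).
    have := tail v m (n - m)%N.
    have : 0 <= 2 * q ^+ (m + (n - m)) * `|v| by rewrite !mulr_ge0 // exprn_ge0 // ltW.
    have := ler_norm (F (m + (n - m))%N v - F m v).
    lra.
have Flin : forall n (b : R) u v, F n (b *: u + v) = b * F n u + F n v.
  move=> + b u v; elim=> [|n IH]; first by rewrite /= mulr0 addr0.
  by rewrite !FS IH psilin; ring.
have philin : forall (b : R) u v, phi (b *: u + v) = b * phi u + phi v.
  move=> b u v; rewrite /phi.
  have -> : (fun n => F n (b *: u + v)) = (fun n => b * F n u + F n v).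
    by apply: funext => n; exact: Flin.
  apply: cvg_lim => //; apply: cvgD; last exact: Fcvg.
  by apply: cvgM; [exact: cvg_cst | exact: Fcvg].
have phib : forall v, `|phi v| <= 2 * `|v|.
  by move=> v; have := phitail v 0%N; rewrite /= subr0 expr0 mulr1.
exists phi; split.
  split; last exact: philin.
  by apply: (@lin_bounded_continuous _ _ _ 2) => //.
move=> j; apply/negP => /eqP p0.
have := phitail (y j) j.+1; rewrite p0 sub0r normrN FS psiy.
have yp : 0 < `|y j| by rewrite normr_gt0.
have qp : 0 < q ^+ j by exact: exprn_gt0.
rewrite exprSr.
have h : q ^+ j * `|y j| <= `|F j (y j) + sg j * q ^+ j * `|y j| |.
  rewrite /sg; case: ifP => hF.
    rewrite mul1r ger0_norm; last by rewrite addr_ge0 // mulr_ge0 // ltW.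
    by rewrite lerDr.
  have hF' : F j (y j) < 0 by rewrite ltNge hF.
  have Kp := mulr_gt0 qp yp.
  rewrite mulN1r ltr0_norm; last by rewrite mulNr; lra.
  rewrite mulNr opprD opprK; lra.
move: h; set K := q ^+ j * `|y j|; set A := `|_|.
have Kp : 0 < K by rewrite mulr_gt0.
have -> : 2 * (q ^+ j * q) * `|y j| = (2 / 3) * K by rewrite /K /q; ring.
lra.
Qed.
Theorem lemma2p1 (R : realType) (X : topologicalType)
  (E : completeNormedModType R) (T : (X -> R) -> E) :
  tychonoff_space R X ->
  ~ finite_set [set: X] ->
  (* T is linear on C(X) *)
  (forall (a : R) (f g : X -> R), continuous f -> continuous g ->
     T (a *: f + g) = a *: T f + T g) ->
  (* T : C_p(X) -> E_w is sequentially continuous *)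
  (forall (u : nat -> X -> R) (f : X -> R),
     (forall k, continuous (u k)) -> continuous f ->
     cvg_pointwise u f -> cvg_weak (fun k => T (u k)) (T f)) ->
  forall U : nat -> set X,
    (forall n, open (U n)) -> (forall n, U n !=set0) ->
    (forall n m, n <> m -> U n `&` U m = set0) ->
    exists N : nat, forall n : nat, (N <= n)%N ->
      forall f : X -> R, continuous f -> supp f `<=` U n -> T f = 0.
Proof.
move=> _ _ Tlin Tcont U _ _ Udisj.
have c0 : continuous (0 : X -> R) by exact: cst_continuous.
have T0 : T 0 = 0.
  have := Tlin 1 0 0 c0 c0; rewrite !scale1r addr0.
  by move/(congr1 (fun z => z - T 0)); rewrite subrr addrK.
have TZ : forall a f, continuous f -> T (a *: f) = a *: T f.
  by move=> a f hf; have := Tlin a f 0 hf c0; rewrite !addr0 T0 addr0.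
have [//|H] := pselect (exists N : nat, forall n : nat, (N <= n)%N ->
      forall f : X -> R, continuous f -> supp f `<=` U n -> T f = 0).
exfalso.
have H' : forall N, exists nf : nat * (X -> R),
    [/\ (N <= nf.1)%N, continuous nf.2, supp nf.2 `<=` U nf.1 & T nf.2 != 0].
  move=> N; have [//|HN] := pselect (exists nf : nat * (X -> R),
    [/\ (N <= nf.1)%N, continuous nf.2, supp nf.2 `<=` U nf.1 & T nf.2 != 0]).
  exfalso; apply: H; exists N => n hn f hf hs.
  have [//|Tf] := eqVneq (T f) 0.
  by exfalso; apply: HN; exists (n, f).
have [g Hg] := choice H'.
pose f k := (g k).2.
pose n k := (g k).1.
have fc : forall k, continuous (f k) by move=> k; case: (Hg k).
have fs : forall k, supp (f k) `<=` U (n k) by move=> k; case: (Hg k).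
have nk : forall k, (k <= n k)%N by move=> k; case: (Hg k).
have [phi [[phic philin] phiy]] := @separating_functional R E (fun k => T (f k))
  (fun k => let: And4 _ _ _ h := Hg k in h).
pose c k := (phi (T (f k)))^-1.
pose u k := c k *: f k.
have uc : forall k, continuous (u k).
  move=> k x; apply: cvgM; [exact: cvg_cst | exact: fc].
have fx0 : forall k x, ~ U (n k) x -> f k x = 0.
  move=> k x hU; apply/eqP; apply: contra_notT hU => hx; exact: fs.
have up : cvg_pointwise u 0.
  move=> x /=; apply/cvgrPdist_le => e e0.
  have [[m Um]|nU] := pselect (exists m, U m x).
    exists m.+1 => // k /= hk.
    have -> : u k x = 0.
      change (c k * f k x = 0); rewrite fx0 ?mulr0 // => hU.
      have nkm : n k <> m by move=> e'; move: (nk k); rewrite e' => /(leq_trans hk); rewrite ltnn.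
      have := Udisj _ _ nkm; move/seteqP => [+ _] => /(_ x) h.
      by apply: h.
    by rewrite subr0; change (`|(0:R)| <= e); rewrite normr0 ltW.
  exists 0%N => // k /= _.
  have -> : u k x = 0.
    by change (c k * f k x = 0); rewrite fx0 ?mulr0 // => hU; apply: nU; exists (n k).
  by rewrite subr0; change (`|(0:R)| <= e); rewrite normr0 ltW.
have := Tcont u 0 uc c0 up phi (conj phic philin).
rewrite T0.
have phi0 : phi 0 = 0.
  have := philin 1 0 0; rewrite !scale1r addr0 mul1r.
  by move/(congr1 (fun z => z - phi 0)); rewrite subrr addrK.
have -> : (fun k => phi (T (u k))) = (fun _ => 1).
  apply: funext => k; rewrite /u TZ //.
  have := philin (c k) (T (f k)) 0; rewrite addr0 phi0 addr0 => ->.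
  by rewrite /c mulVf.
rewrite phi0 => conv.
have [N _ hN] := @cvgr_dist_lt _ _ _ _ _ (fun _ : nat => (1:R)) 0 conv 1 ltr01.
by have := hN N (leqnn N); rewrite /= sub0r normrN normr1 ltxx.
Qed.
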